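(* Let $G$ be an infinite finitely generated residually finite group, $S$ a finite symmetric generating set, and $(X_n)_{n\ge0}$ the lazy random walk on $\mathrm{Cay}(G,S)$. Suppose there is a sequence of positive numbers $(p_k)_{k\ge2}$ with $\sum_{k\ge2}p_k<\infty$ and $\mathbb{P}(X_n\in\Lambda_k\setminus\{e\})\le p_k$ for all $n\ge1$ and $k\ge2$. Then $$\lim_{n\to\infty}\mathbb{E}[D_G(X_n)]=2+\sum_{k\ge2}\frac{1}{[G:\Lambda_k]}<\infty.$$
   Context: For $g\ne e$, $D_G(g)=\min\{[G:N]: N\lhd G\text{ of finite index},\ g\notin N\}$, and $D_G(e)=0$. For $k\ge2$, $\Lambda_k$ is the intersection of all normal subgroups of $G$ of index at most $k$. The lazy random walk on $\mathrm{Cay}(G,S)$ is the Markov chain with $X_0=e$ and transition matrix $\frac12 I+\frac12P$, where $P(x,y)=\frac1{|S|}\#\{s\in S:y=xs\}$. *)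

(* Defs.v *)
From HB Require Import structures.
From mathcomp Require Import all_boot all_order all_algebra.
From mathcomp Require Import all_classical all_reals all_analysis.
Set Implicit Arguments. Unset Strict Implicit. Unset Printing Implicit Defensive.
Import Order.TTheory GRing.Theory Num.Theory.

Definition group_axioms (G : eqType) (mul : G -> G -> G) (inv : G -> G) (e : G) : Prop :=
  [/\ (forall x y z, mul x (mul y z) = mul (mul x y) z),
      (forall x, mul e x = x), (forall x, mul x e = x),
      (forall x, mul (inv x) x = e) & (forall x, mul x (inv x) = e)].

Section AbstractGroup.
Variables (G : eqType) (mul : G -> G -> G) (inv : G -> G) (e : G).

Definition infinite_carrier : Prop := ~ exists l : seq G, forall g, g \in l.

Definition normal_subgroup (N : G -> Prop) : Prop :=
  [/\ N e, (forall x y, N x -> N y -> N (mul x y)), (forall x, N x -> N (inv x))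
    & (forall x g, N x -> N (mul (inv g) (mul x g)))].

(* [G : N] = k : there are k left cosets r_i N, i.e. every g lies in exactly
   one coset r_i N. *)
Definition has_index (N : G -> Prop) (k : nat) : Prop :=
  exists r : 'I_k -> G,
    forall g, exists i, N (mul (inv (r i)) g) /\
                       forall j, N (mul (inv (r j)) g) -> j = i.

Definition finite_index (N : G -> Prop) : Prop := exists k, has_index N k.

(* the index [G : N] as a natural number (0 if N has infinite index) *)
Definition gindex (N : G -> Prop) : nat :=
  match pselect (exists k, has_index N k) with
  | left h => ex_minn (P := fun k => `[< has_index N k >]) 
                (let: ex_intro k hk := h in ex_intro _ k (asboolT hk))
  | right _ => 0
  end.

Definition residually_finite : Prop :=
  forall g, g != e -> exists N, normal_subgroup N /\ finite_index N /\ ~ N g.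

Definition D_sep (g : G) (k : nat) : Prop :=
  exists N, normal_subgroup N /\ has_index N k /\ ~ N g.

Definition D_G (g : G) : nat :=
  if g == e then 0 else
  match pselect (exists k, D_sep g k) with
  | left h => ex_minn (P := fun k => `[< D_sep g k >])
                (let: ex_intro k hk := h in ex_intro _ k (asboolT hk))
  | right _ => 0
  end.

Definition Lambda (k : nat) (g : G) : Prop :=
  forall N, normal_subgroup N -> (exists j, (j <= k)%N /\ has_index N j) -> N g.

Definition sym_gen_set (S : seq G) : Prop :=
  [/\ uniq S, (forall s, s \in S -> inv s \in S)
    & (forall g, exists w : seq G, all (mem S) w /\ g = foldl mul e w)].

(* Lazy random walk X_n on Cay(G,S): X_0 = e, X_{n+1} = X_n * Y_{n+1} with
   i.i.d. increments Y equal to e w.p. 1/2 and to each s in S w.p. 1/(2|S|).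
   We encode an increment by i : 'I_(2|S|), uniformly distributed:
   i < |S| means "stay", otherwise step by S_(i-|S|). *)
Definition lazy_step (S : seq G) (i : nat) : G :=
  if (i < size S)%N then e else nth e S (i - size S).

Definition walk (S : seq G) (w : seq nat) : G :=
  foldl (fun x i => mul x (lazy_step S i)) e w.

Definition lazy_expect (R : realType) (S : seq G) (f : G -> R) (n : nat) : R :=
  (((2 * size S)%:R ^- n) *
   \sum_(w : n.-tuple 'I_(2 * size S)) f (walk S (map val w)))%R.

Definition lazy_prob (R : realType) (S : seq G) (A : G -> Prop) (n : nat) : R :=
  lazy_expect S (fun g => if `[< A g >] then 1%R else 0%R) n.

End AbstractGroup.

(* Main.v *)
Require Import Defs.
From HB Require Import structures.
From mathcomp Require Import all_boot all_order all_algebra.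
From mathcomp Require Import all_classical all_reals all_analysis.
Set Implicit Arguments. Unset Strict Implicit. Unset Printing Implicit Defensive.
Import Order.TTheory GRing.Theory Num.Theory.
Import numFieldNormedType.Exports.
From mathcomp Require Import ring lra.
Section Grp.
Variables (G : eqType) (mul : G -> G -> G) (inv : G -> G) (e : G).
Hypothesis ga : group_axioms mul inv e.

Lemma mulA x y z : mul x (mul y z) = mul (mul x y) z.
Proof. by case: ga. Qed.
Lemma mul1g x : mul e x = x. Proof. by case: ga. Qed.
Lemma mulg1 x : mul x e = x. Proof. by case: ga. Qed.
Lemma mulVg x : mul (inv x) x = e. Proof. by case: ga. Qed.
Lemma mulgV x : mul x (inv x) = e. Proof. by case: ga. Qed.
Lemma mulKg x y : mul (inv x) (mul x y) = y.
Proof. by rewrite mulA mulVg mul1g. Qed.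
Lemma mulKVg x y : mul x (mul (inv x) y) = y.
Proof. by rewrite mulA mulgV mul1g. Qed.
Lemma mulIg z x y : mul x z = mul y z -> x = y.
Proof. by move=> h; rewrite -(mulg1 x) -(mulgV z) mulA h -mulA mulgV mulg1. Qed.
Lemma mulgI z x y : mul z x = mul z y -> x = y.
Proof. by move=> h; rewrite -(mulKg z x) h mulKg. Qed.

Lemma invK x : inv (inv x) = x.
Proof. by rewrite -[RHS](mulKg (inv x)) mulVg mulg1. Qed.
Lemma invM x y : inv (mul x y) = mul (inv y) (inv x).
Proof.
apply: (@mulgI (mul x y)); rewrite mulgV -mulA (mulA y) mulgV mul1g mulgV //.
Qed.
Lemma inv1 : inv e = e.
Proof. by rewrite -[LHS]mul1g mulgV. Qed.
Section Sub.
Variable N : G -> Prop.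
Hypothesis nN : normal_subgroup mul inv e N.
Lemma N1 : N e. Proof. by case: nN. Qed.
Lemma NM x y : N x -> N y -> N (mul x y). Proof. by case: nN => _ h _ _; apply: h. Qed.
Lemma NV x : N x -> N (inv x). Proof. by case: nN => _ _ h _; apply: h. Qed.
Lemma NJ x g : N x -> N (mul (inv g) (mul x g)). Proof. by case: nN => _ _ _ h; apply: h. Qed.
Lemma NVV x : N (inv x) -> N x. Proof. by move/NV; rewrite invK. Qed.
Lemma Ntrans x y z : N (mul (inv x) y) -> N (mul (inv y) z) -> N (mul (inv x) z).
Proof. by move=> h1 h2; have := NM h1 h2; rewrite -mulA mulKVg. Qed.
Lemma Nsym x y : N (mul (inv x) y) -> N (mul (inv y) x).
Proof. by move/NV; rewrite invM invK. Qed.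
Lemma Nrefl x : N (mul (inv x) x). Proof. by rewrite mulVg; exact: N1. Qed.
Lemma Nright x y z : N (mul (inv x) y) -> N (mul (inv (mul x z)) (mul y z)).
Proof.
move=> h; have := NJ z h; rewrite invM -!mulA.
by congr N; congr mul; rewrite mulA.
Qed.
End Sub.
End Grp.
Definition reps (G : eqType) (mul : G -> G -> G) (inv : G -> G) (N : G -> Prop) j (r : 'I_j -> G) :=
  forall g, exists i, N (mul (inv (r i)) g) /\ forall j, N (mul (inv (r j)) g) -> j = i.

Section Cos.
Variables (G : eqType) (mul : G -> G -> G) (inv : G -> G) (e : G).
Hypothesis ga : group_axioms mul inv e.
Variable N : G -> Prop.
Hypothesis nN : normal_subgroup mul inv e N.
Variables (m : nat) (r : 'I_m -> G).
Hypothesis hr : reps mul inv N r.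

Let Ntr x y z := @Ntrans G mul inv e ga N nN x y z.
Let Nsy x y := @Nsym G mul inv e ga N nN x y.
Let Nrf x := @Nrefl G mul inv e ga N nN x.
Let Nri x y z := @Nright G mul inv e ga N nN x y z.
Definition cosi (g : G) : 'I_m := projT1 (cid (hr g)).
Lemma cosP g : N (mul (inv (r (cosi g))) g).
Proof. by rewrite /cosi; case: cid => i [] /=. Qed.
Lemma cos_uniq g j : N (mul (inv (r j)) g) -> j = cosi g.
Proof. by rewrite /cosi; case: cid => i [] /= _; apply. Qed.
Lemma cos_eq x y : cosi x = cosi y <-> N (mul (inv x) y).
Proof.
split=> [h|h].
  have h1 := cosP x; have h2 := cosP y; rewrite h in h1.
  exact (Ntr (Nsy h1) h2).
apply: cos_uniq. exact (Ntr (cosP x) h).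
Qed.
Lemma cos_r i : cosi (r i) = i.
Proof. by apply/esym/cos_uniq; apply: Nrf. Qed.
Lemma cos_right x y z : cosi x = cosi y -> cosi (mul x z) = cosi (mul y z).
Proof. by move/cos_eq=> h; apply/cos_eq; apply: Nri h. Qed.
Lemma cos_right_inj z : injective (fun j => cosi (mul (r j) z)).
Proof.
move=> i j /= /(cos_right (inv z)); rewrite -!(mulA ga) !(mulgV ga) !(mulg1 ga).
by rewrite !cos_r.
Qed.
Lemma cos_right_bij z i : exists! j, cosi (mul (r j) z) = i.
Proof.
have inj := @cos_right_inj z.
have /injF_bij bij := inj. 
exists (invF inj i); split; first by rewrite (f_invF inj).
by move=> j hj; rewrite -hj (invF_f inj).
Qed.
End Cos.

Section Index.
Variables (G : eqType) (mul : G -> G -> G) (inv : G -> G) (e : G).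
Hypothesis ga : group_axioms mul inv e.
Variable N : G -> Prop.
Hypothesis nN : normal_subgroup mul inv e N.

Lemma has_index_le m1 m2 : has_index mul inv N m1 -> has_index mul inv N m2 -> (m1 <= m2)%N.
Proof.
move=> [r1 h1] [r2 h2].
have hinj : injective (fun i : 'I_m1 => @cosi G mul inv N m2 r2 h2 (r1 i)).
  move=> i j /= /(cos_eq ga nN h2) h.
  by rewrite -(cos_r ga nN h1 i) -(cos_r ga nN h1 j); apply/(cos_eq ga nN h1).
by have := @leq_card _ _ _ hinj; rewrite !card_ord.
Qed.
Lemma has_index_uniq m1 m2 : has_index mul inv N m1 -> has_index mul inv N m2 -> m1 = m2.
Proof. by move=> h1 h2; apply/eqP; rewrite eqn_leq !(has_index_le h1 h2, has_index_le h2 h1). Qed.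
Lemma gindexE m : has_index mul inv N m -> gindex mul inv N = m.
Proof.
move=> hm; rewrite /gindex; case: pselect => [h|[]]; last by exists m.
case: h => k hk /=; case: ex_minnP => j /asboolP hj _.
exact: has_index_uniq hj hm.
Qed.
End Index.
Section Lam.
Variables (G : eqType) (mul : G -> G -> G) (inv : G -> G) (e : G).
Hypothesis ga : group_axioms mul inv e.

Lemma Lambda_normal k : normal_subgroup mul inv e (Lambda mul inv e k).
Proof.
split.
- by move=> N nN _; exact: N1 nN.
- move=> x y hx hy N nN hN. exact: (NM nN (hx N nN hN) (hy N nN hN)).
- by move=> x hx N nN hN; exact: (NV nN (hx N nN hN)).
- by move=> x g hx N nN hN; apply: (NJ nN); exact: hx.
Qed.

Lemma has_index0 N : ~ has_index mul inv N 0.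
Proof. by case=> r /(_ e) [[]]. Qed.

Lemma has_index1 N g : has_index mul inv N 1 -> normal_subgroup mul inv e N -> N g.
Proof.
move=> [r hr] nN; have [i [hi _]] := hr g; have [i' [hi' _]] := hr e.
have eii : i = i' by rewrite (ord1 i) (ord1 i').
rewrite eii in hi; rewrite (mulg1 ga) in hi'.
have := NV nN hi'; rewrite (invK ga) => h.
by have := NM nN h hi; rewrite (mulKVg ga).
Qed.

Hypothesis rf : residually_finite mul inv e.

Lemma D_Gex g : g != e -> exists k, D_sep mul inv e g k.
Proof. by move=> /rf [N [nN [[k hk] hg]]]; exists k, N. Qed.

Lemma D_G_gt g k : g != e -> ((k < D_G mul inv e g)%N <-> Lambda mul inv e k g).
Proof.
move=> ge; rewrite /D_G (negPf ge); case: pselect => [h|[]]; last exact: D_Gex.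
case: h => k0 hk0 /=; case: ex_minnP => d /asboolP [N [nN [hd hN]]] dmin.
split=> [kd|hL].
  move=> N' nN' [j [jk hj]]; apply: contrapT => hN'.
  have : (d <= j)%N by apply: dmin; apply/asboolP; exists N'.
  by move=> dj; have := leq_trans dj jk; rewrite leqNgt kd.
rewrite ltnNge; apply/negP=> dk; apply: hN; apply: hL nN _.
by exists d.
Qed.

Lemma D_G_e : D_G mul inv e e = 0%N.
Proof. by rewrite /D_G eqxx. Qed.
End Lam.
Section FinF.
Variables (G : eqType) (mul : G -> G -> G) (inv : G -> G) (e : G).

Lemma finite_from_F (H : G -> Prop) (T : finType) (F : G -> T) :
  (forall g h, F g = F h <-> H (mul (inv g) h)) -> exists m, has_index mul inv H m.
Proof.
move=> hF.
pose A := [set t : T | `[< exists g, F g = t >]].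
pose pre t := match pselect (exists g, F g = t) with
  left h => projT1 (cid h) | right _ => e end.
have preP t : t \in A -> F (pre t) = t.
  rewrite inE => /asboolP ex; rewrite /pre; case: pselect => [h|//].
  by case: cid.
exists #|A|, (fun i => pre (enum_val i)) => g.
have gA : F g \in A by rewrite inE; apply/asboolP; exists g.
exists (enum_rank_in gA (F g)); split.
  by apply/hF; rewrite preP ?enum_valP // enum_rankK_in.
move=> j /hF; rewrite preP ?enum_valP // => ej.
by apply: (@enum_val_inj _ A); rewrite ej enum_rankK_in.
Qed.
End FinF.

Section LamFin.
Variables (G : eqType) (mul : G -> G -> G) (inv : G -> G) (e : G).
Hypothesis ga : group_axioms mul inv e.
Variable S : seq G.
Hypothesis hgen : forall g, exists w : seq G, all (mem S) w /\ g = foldl mul e w.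
Variable k : nat.


Definition Dt := ({ffun 'I_(size S) -> {ffun 'I_k -> 'I_k}} * 'I_k)%type.

Definition stepd (d : Dt) (x : 'I_k) (s : G) : 'I_k :=
  match (insub (index s S) : option 'I_(size S)) with
  | Some t => d.1 t x | None => x end.

Definition wordof g := projT1 (cid (hgen g)).
Lemma wordofP g : all (mem S) (wordof g) /\ g = foldl mul e (wordof g).
Proof. by rewrite /wordof; case: cid. Qed.

Definition valg (d : Dt) g := foldl (stepd d) d.2 (wordof g).

Definition realized (d : Dt) : Prop :=
  exists N j (r : 'I_j -> G) (hr : reps mul inv N r) (hjk : (j <= k)%N),
   normal_subgroup mul inv e N /\ d.2 = widen_ord hjk (cosi hr e) /\
   forall t i, d.1 t (widen_ord hjk i) = widen_ord hjk (cosi hr (mul (r i) (nth e S t))).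

Lemma run_real (d : Dt) N j (r : 'I_j -> G) (hr : reps mul inv N r) (hjk : (j <= k)%N) :
   normal_subgroup mul inv e N ->
   (forall t i, d.1 t (widen_ord hjk i) = widen_ord hjk (cosi hr (mul (r i) (nth e S t)))) ->
   forall w x, all (mem S) w ->
   foldl (stepd d) (widen_ord hjk (cosi hr x)) w = widen_ord hjk (cosi hr (foldl mul x w)).
Proof.
move=> nN hd; elim=> [//|s w IH] x /= /andP [sS wS].
have ht : (index s S < size S)%N by rewrite index_mem.
have -> : stepd d (widen_ord hjk (cosi hr x)) s = d.1 (Ordinal ht) (widen_ord hjk (cosi hr x)) by rewrite /stepd insubT.
rewrite hd nth_index //.
rewrite (@cos_right _ _ _ _ ga _ nN _ _ hr _ x); first exact: IH.
by rewrite (cos_r ga nN).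
Qed.

Definition Fk g : {ffun Dt -> option 'I_k} :=
  [ffun d => if `[< realized d >] then Some (valg d g) else None].

Lemma FkP g h : Fk g = Fk h <-> Lambda mul inv e k (mul (inv g) h).
Proof.
split.
  move=> eF N nN [j [jk [r hr0]]].
  have hr : reps mul inv N r := hr0.
  pose d : Dt := ([ffun t : 'I_(size S) => [ffun x : 'I_k =>
       match (insub (val x) : option 'I_j) with
       | Some i => widen_ord jk (cosi hr (mul (r i) (nth e S t)))
       | None => x end]], widen_ord jk (cosi hr e)).
  have hd : forall t i, d.1 t (widen_ord jk i) = widen_ord jk (cosi hr (mul (r i) (nth e S t))).
    by move=> t i; rewrite /d /= !ffunE /= valK.
  have rd : realized d by exists N, j, r, hr, jk.
  have := congr1 (fun f : {ffun Dt -> option 'I_k} => f d) eF; rewrite !ffunE; case: asboolP => // _ [].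
  rewrite /valg /= (run_real nN hd e (wordofP g).1) (run_real nN hd e (wordofP h).1).
  rewrite -(wordofP g).2 -(wordofP h).2 => /(congr1 val) /= /val_inj.
  by move/(cos_eq ga nN hr).
move=> hL; apply/ffunP => d; rewrite !ffunE; case: asboolP => // rd; congr Some.
case: rd => N [j [r [hr [jk [nN [h2 hd]]]]]].
rewrite /valg h2 (run_real nN hd e (wordofP g).1) (run_real nN hd e (wordofP h).1).
rewrite -(wordofP g).2 -(wordofP h).2; congr widen_ord.
apply/(cos_eq ga nN hr); apply: hL nN _.
by exists j; split => //; exists r.
Qed.

Lemma Lambda_fin : exists m, has_index mul inv (Lambda mul inv e k) m.
Proof. exact: (finite_from_F e FkP). Qed.
End LamFin.
Local Open Scope ring_scope.

Lemma sum_tuple_cons (R : realType) (T : finType) n (F : n.+1.-tuple T -> R) :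
  \sum_(w : n.+1.-tuple T) F w = \sum_(t : T) \sum_(w : n.-tuple T) F [tuple of t :: w].
Proof.
rewrite pair_big /=.
rewrite (reindex (fun p : T * n.-tuple T => [tuple of p.1 :: p.2])) //=.
exists (fun w : n.+1.-tuple T => (thead w, [tuple of behead w])).
  by case=> t w _ /=; rewrite theadE; congr pair; apply: val_inj.
by move=> w _ /=; rewrite [RHS]tuple_eta.
Qed.

Lemma sum_tuple0 (R : realType) (T : finType) (F : 0.-tuple T -> R) :
  \sum_(w : 0.-tuple T) F w = F [tuple].
Proof.
rewrite (eq_bigr (fun _ => F [tuple])); last by move=> w _; rewrite tuple0.
by rewrite sumr_const card_tuple expn0.
Qed.

Section Walk.
Variables (G : eqType) (mul : G -> G -> G) (inv : G -> G) (e : G).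
Hypothesis ga : group_axioms mul inv e.
Variable S : seq G.
Hypothesis hS : (0 < size S)%N.
Variables (N : G -> Prop) (m : nat) (r : 'I_m -> G).
Hypothesis nN : normal_subgroup mul inv e N.
Hypothesis hr : reps mul inv N r.
Variable R : realType.

Let c := @cosi G mul inv N m r hr.
Let s2 := (2 * size S)%N.

Definition wf x (u : seq nat) := foldl (fun y i => mul y (lazy_step e S i)) x u.

Definition cnt n x i : R :=
  \sum_(w : n.-tuple 'I_s2) ((c (wf x (map val w)) == i)%:R).

Lemma cnt0 x i : cnt 0 x i = (c x == i)%:R.
Proof. by rewrite /cnt sum_tuple0. Qed.

Lemma cntS n x i : cnt n.+1 x i = \sum_(t : 'I_s2) cnt n (mul x (lazy_step e S t)) i.
Proof. by rewrite /cnt sum_tuple_cons. Qed.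

Lemma wf_cos x y u : c x = c y -> c (wf x u) = c (wf y u).
Proof.
elim: u x y => [//|i u IH] x y h /=; apply: IH.
exact: (cos_right ga nN).
Qed.

Lemma cnt_cos n x i : cnt n x i = cnt n (r (c x)) i.
Proof.
rewrite /cnt; apply: eq_bigr => w _; rewrite (@wf_cos x (r (c x))) //.
by rewrite /c (cos_r ga nN).
Qed.

Lemma cnt_ge0 n x i : 0 <= cnt n x i.
Proof. by apply: sumr_ge0 => w _; rewrite ler0n. Qed.

Lemma sum_eqi (T : finType) (a : T) : \sum_(i : T) ((a == i)%:R : R) = 1.
Proof.
rewrite (bigD1 a) //= eqxx big1 ?addr0 // => i ne; by rewrite eq_sym (negPf ne).
Qed.

Lemma cnt_row n x : \sum_i cnt n x i = (s2 ^ n)%:R.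
Proof.
rewrite /cnt exchange_big /= (eq_bigr (fun _ => 1)); last by move=> w _; rewrite sum_eqi.
by rewrite sumr_const card_tuple card_ord.
Qed.

Lemma wf_mul x u : wf x u = mul x (wf e u).
Proof.
elim: u x => [|i u IH] x /=; first by rewrite (mulg1 ga).
by rewrite IH [in RHS]IH (mul1g ga) (mulA ga).
Qed.

Lemma cnt_col n i : \sum_j cnt n (r j) i = (s2 ^ n)%:R.
Proof.
rewrite /cnt exchange_big /= (eq_bigr (fun _ => 1)); last first.
  move=> w _; rewrite /c; have [j [hj uj]] := cos_right_bij ga nN hr (wf e (map val w)) i.
  rewrite (bigD1 j) //= (wf_mul (r j)) hj eqxx big1 ?addr0 // => j' ne.
  rewrite wf_mul; case: eqP => // h; case/negP: ne; apply/eqP; symmetry; exact: (uj j' h).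
by rewrite sumr_const card_tuple card_ord.
Qed.

Lemma cnt_CK L n x i :
  cnt (L + n) x i = \sum_j cnt L x j * cnt n (r j) i.
Proof.
elim: L x => [|L IH] x.
  rewrite add0n cnt_cos (bigD1 (c x)) //= cnt0 eqxx mul1r big1 ?addr0 //.
  by move=> j ne; rewrite cnt0 eq_sym (negPf ne) mul0r.
rewrite addSn cntS (eq_bigr _ (fun t _ => IH _)) exchange_big /=.
by apply: eq_bigr => j _; rewrite cntS mulr_suml.
Qed.
End Walk.
Local Open Scope ring_scope.

Lemma tuple_of_seq n K (u : seq nat) : (0 < K)%N -> size u = n -> all (fun x => x < K)%N u ->
  exists w : n.-tuple 'I_K, map val w = u.
Proof.
move=> K0 hsz hall.
have ht : size (map (insubd (Ordinal K0)) u) == n by rewrite size_map hsz.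
exists (Tuple ht) => /=; rewrite -map_comp; apply: map_id_in => x xu /=.
by rewrite val_insubd; move/allP: hall => /(_ x xu) ->.
Qed.

Section Pos.
Variables (G : eqType) (mul : G -> G -> G) (inv : G -> G) (e : G).
Hypothesis ga : group_axioms mul inv e.
Variable S : seq G.
Hypothesis hS : (0 < size S)%N.
Hypothesis hgen : forall g, exists w : seq G, all (mem S) w /\ g = foldl mul e w.
Variables (N : G -> Prop) (m : nat) (r : 'I_m -> G).
Hypothesis nN : normal_subgroup mul inv e N.
Hypothesis hr : reps mul inv N r.
Variable R : realType.

Lemma foldl_mul x w : foldl mul x w = mul x (foldl mul e w).
Proof.
elim: w x => [|s w IH] x /=; first by rewrite (mulg1 ga).
by rewrite IH [in RHS]IH (mul1g ga) (mulA ga).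
Qed.

Lemma wf_letters x w : all (mem S) w ->
  wf mul e S x (map (fun s => size S + index s S)%N w) = foldl mul x w.
Proof.
elim: w x => [//|s w IH] x /= /andP [sS wS]; rewrite -IH //.
congr wf; rewrite /lazy_step ltnNge leq_addr /= addKn nth_index //.
Qed.

Lemma wf_pad x n : wf mul e S x (nseq n 0%N) = x.
Proof. by elim: n => [//|n IH] /=; rewrite /lazy_step hS (mulg1 ga). Qed.

Lemma wf_cat x u1 u2 : wf mul e S x (u1 ++ u2) = wf mul e S (wf mul e S x u1) u2.
Proof. by rewrite /wf foldl_cat. Qed.

Lemma cnt_pos : exists L, forall j j', 1 <= cnt e S hr R L (r j) j'.
Proof.
pose ln (p : 'I_m * 'I_m) := size (wordof hgen (mul (inv (r p.1)) (r p.2))).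
pose L := (\max_(p : 'I_m * 'I_m) ln p)%N.
exists L => j j'.
pose g := mul (inv (r j)) (r j').
have [wS wg] := wordofP hgen g.
pose u := (map (fun s => size S + index s S)%N (wordof hgen g) ++ nseq (L - ln (j, j')) 0%N).
have hl : (ln (j, j') <= L)%N by apply: (@leq_bigmax _ ln (j, j')).
have K0 : (0 < 2 * size S)%N by rewrite muln_gt0.
have [w hw] : exists w : L.-tuple 'I_(2 * size S), map val w = u.
  apply: tuple_of_seq => //.
    by rewrite size_cat size_map size_nseq /ln /= subnKC.
  rewrite all_cat all_nseq K0 orbT andbT all_map; apply/allP => s sw /=.
  have sS : s \in S by move/allP: wS => /(_ s sw).
  by rewrite mul2n -addnn ltn_add2l index_mem.
rewrite /cnt (bigD1 w) //= hw wf_cat wf_pad wf_letters // foldl_mul -wg /g (mulKVg ga).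
rewrite (cos_r ga nN) eqxx lerDl; apply: sumr_ge0 => ? _; exact: ler0n.
Qed.
End Pos.
Local Open Scope ring_scope.
Local Open Scope classical_set_scope.

Lemma wavg (R : realType) m (w x : 'I_m -> R) a b :
  (forall j, 0 <= w j) -> (forall j, a <= x j <= b) ->
  (\sum_j w j) * a <= \sum_j w j * x j <= (\sum_j w j) * b.
Proof.
move=> w0 hx; rewrite !mulr_suml; apply/andP; split; apply: ler_sum => j _.
  by apply: ler_wpM2l => //; case/andP: (hx j).
by apply: ler_wpM2l => //; case/andP: (hx j).
Qed.

Lemma contract (R : realType) m (v : nat -> 'I_m -> R) (Q : nat -> 'I_m -> 'I_m -> R) L (d : R) :
 (forall t n j, v (t + n)%N j = \sum_j' Q t j j' * v n j') ->
 (forall t j j', 0 <= Q t j j') -> (forall t j, \sum_j' Q t j j' = 1) ->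
 (forall j j', d <= Q L j j') -> 0 < d ->
 (forall n, \sum_j v n j = 1) -> (forall j, 0 <= v 0%N j <= 1) ->
 forall j, v n j @[n --> \oo] --> (m%:R^-1 : R).
Proof.
move=> hv Q0 Q1 QL d0 vs v0 j0.
have m0 : (0 < m)%N by case: j0 => j /=; case: m {Q QL Q0 Q1 hv vs v0 v} j.
pose rho := 1 - m%:R * d.
have rho0 : 0 <= rho.
  rewrite subr_ge0; have : \sum_(j < m) d <= \sum_(j < m) Q L j0 j.
    by apply: ler_sum => j _; exact: QL.
  by rewrite Q1 sumr_const card_ord mulr_natl.
have rho1 : rho < 1 by rewrite ltrBlDr ltrDl mulr_gt0 // ltr0n.
have claim : forall q, exists a b, b - a <= rho ^+ q /\
    forall n, (q * L <= n)%N -> forall j, a <= v n j <= b.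
  elim=> [|q [a [b [hab hn]]]].
    exists 0, 1; split; first by rewrite subr0 expr0.
    move=> n _ j; rewrite -[n]addn0 hv.
    have := wavg (Q0 n j) v0; rewrite Q1 mul1r mulr1 //.
  exists (d + rho * a), (d + rho * b); split.
    have -> : d + rho * b - (d + rho * a) = rho * (b - a) by ring.
    by rewrite exprS ler_wpM2l.
  move=> n hn' j.
  have hLn : (L <= n)%N by apply: leq_trans hn'; rewrite mulSn leq_addr.
  have hn2 : (q * L <= n - L)%N by rewrite leq_subRL // -mulSn.
  rewrite -(subnKC hLn) hv.
  have -> : \sum_j' Q L j j' * v (n - L)%N j' =
      d + \sum_j' (Q L j j' - d) * v (n - L)%N j'.
    rewrite [RHS]addrC -[X in _ = _ + X]mulr1 -(vs (n - L)%N) mulr_sumr -big_split /=.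
    by apply: eq_bigr => j' _; ring.
  have hw : \sum_j' (Q L j j' - d) = rho.
    by rewrite sumrB Q1 sumr_const card_ord /rho mulr_natl.
  have w0 : forall j', 0 <= Q L j j' - d by move=> j'; rewrite subr_ge0.
  have := wavg w0 (hn _ hn2).
  by rewrite hw !lerD2l.
have hrho : `|rho| < 1 by rewrite ger0_norm.
apply/cvgrPdist_le => eps eps0.
have /cvgrPdist_le /(_ eps eps0) [q0 _ hq0] := cvg_expr hrho.
have := hq0 q0 (leqnn _); rewrite /= sub0r normrN ger0_norm ?exprn_ge0 // => hq.
have [a [b [hab hn]]] := claim q0.
exists (q0 * L)%N => // n /= hn'.
have hvn := hn n hn'.
have hm : (m%:R : R) * a <= 1 <= m%:R * b.
  have := wavg (fun j : 'I_m => @ler01 R) hvn.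
  rewrite [X in _ <= X <= _](eq_bigr (v n)); last by move=> j _; rewrite mul1r.
  by rewrite vs sumr_const card_ord -mulr_natl mulr1.
have mpos : (0 : R) < m%:R by rewrite ltr0n.
have ha : a <= m%:R^-1 by rewrite -(ler_pM2l mpos) mulfV ?gt_eqF //; case/andP: hm.
have hb : m%:R^-1 <= b by rewrite -(ler_pM2l mpos) mulfV ?gt_eqF //; case/andP: hm.
case/andP: (hvn j0) => h1 h2.
rewrite ler_norml; apply/andP; split; lra.
Qed.
Local Open Scope ring_scope.
Local Open Scope classical_set_scope.

Section WalkCvg.
Variables (G : eqType) (mul : G -> G -> G) (inv : G -> G) (e : G).
Hypothesis ga : group_axioms mul inv e.
Variable S : seq G.
Hypothesis hS : (0 < size S)%N.
Hypothesis hgen : forall g, exists w : seq G, all (mem S) w /\ g = foldl mul e w.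
Variables (N : G -> Prop) (m : nat) (r : 'I_m -> G).
Hypothesis nN : normal_subgroup mul inv e N.
Hypothesis hr : reps mul inv N r.
Variable R : realType.

Let den n : R := ((2 * size S)%:R : R) ^+ n.
Let ct n x i := cnt e S hr R n x i.
Let c := cosi hr.

Lemma den_gt0 n : 0 < den n.
Proof. by rewrite /den exprn_gt0 // ltr0n muln_gt0. Qed.

Lemma prob_cnt n : lazy_prob mul e R S (fun g => N g) n = ct n e (c e) / den n.
Proof.
rewrite /lazy_prob /lazy_expect mulrC; congr (_ * _); apply: eq_bigr => w _.
have -> : walk mul e S (map val w) = wf mul e S e (map val w) by [].
case: asboolP => h; case: eqP => // h'.
- by case: h'; apply/esym/(cos_eq ga nN hr); rewrite (inv1 ga) (mul1g ga).
- by case: h; have := (cos_eq ga nN hr e _).1 (esym h'); rewrite (inv1 ga) (mul1g ga).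
Qed.

Lemma walk_cvg : lazy_prob mul e R S (fun g => N g) n @[n --> \oo] --> (m%:R^-1 : R).
Proof.
have [L hL] := cnt_pos ga hS hgen nN hr R.
pose v n j := ct n (r j) (c e) / den n.
pose Q t j j' := ct t (r j) j' / den t.
have dne n : den n != 0 by rewrite gt_eqF // den_gt0.
have key : forall j, v n j @[n --> \oo] --> (m%:R^-1 : R).
  apply: (@contract R m v Q L (den L)^-1).
  - move=> t n j; rewrite /v /Q /den exprD invfM /ct (cnt_CK ga S nN hr R t n) mulr_suml.
    by apply: eq_bigr => j' _; ring.
  - by move=> t j j'; rewrite /Q divr_ge0 ?cnt_ge0 // ltW // den_gt0.
  - move=> t j; rewrite /Q -mulr_suml /ct cnt_row natrX mulfV //.
  - move=> j j'; rewrite /Q -[X in X <= _]mul1r; apply: ler_wpM2r; [by rewrite invr_ge0 ltW ?den_gt0 | exact: hL].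
  - by rewrite invr_gt0 den_gt0.
  - move=> n; rewrite /v -mulr_suml /ct cnt_col // natrX mulfV //.
  - move=> j; rewrite /v /den expr0 invr1 mulr1 /ct cnt0.
    by case: eqP => _; rewrite ?ler01 ?lexx.
have -> : (fun n => lazy_prob mul e R S (fun g => N g) n) = (fun n => v n (c e)).
  apply: funext => n; rewrite prob_cnt /v /ct (cnt_cos ga _ nN) //.
exact: key.
Qed.
End WalkCvg.
Local Open Scope ring_scope.
Local Open Scope classical_set_scope.

Lemma exists_bound (T : eqType) (P : nat -> T -> Prop) (l : seq T) :
  (forall K K' y, (K <= K')%N -> P K y -> P K' y) ->
  (forall y, y \in l -> exists K, P K y) -> exists K, forall y, y \in l -> P K y.
Proof.
move=> mono; elim: l => [|a l IH] h; first by exists 0%N.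
have [Ka ha] := h a (mem_head _ _).
have [K' hK'] : exists K, forall y, y \in l -> P K y by apply: IH => y yl; apply: h; rewrite inE yl orbT.
exists (maxn Ka K') => y; rewrite inE => /orP [/eqP ->|yl].
  by apply: mono ha; rewrite leq_maxl.
by apply: mono (hK' y yl); rewrite leq_maxr.
Qed.

Section Prob.
Variables (G : eqType) (mul : G -> G -> G) (e : G) (S : seq G) (R : realType).
Definition ind (A : G -> Prop) g : R := if `[< A g >] then 1 else 0.

Lemma probE A n : lazy_prob mul e R S A n =
  ((2 * size S)%:R ^- n) * \sum_(w : n.-tuple 'I_(2 * size S)) ind A (walk mul e S (map val w)).
Proof. by []. Qed.

Lemma prob_le (A B : G -> Prop) n : (forall g, A g -> B g) ->
  lazy_prob mul e R S A n <= lazy_prob mul e R S B n.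
Proof.
move=> AB; rewrite !probE ler_wpM2l ?invr_ge0 ?exprn_ge0 ?ler0n //.
apply: ler_sum => w _; rewrite /ind; case: asboolP => ha; case: asboolP => hb //.
by case: hb; apply: AB.
Qed.

Lemma prob_ge0 A n : 0 <= lazy_prob mul e R S A n.
Proof.
rewrite probE mulr_ge0 ?invr_ge0 ?exprn_ge0 ?ler0n //.
by apply: sumr_ge0 => w _; rewrite /ind; case: asboolP.
Qed.

Lemma prob_diff (A B : G -> Prop) n : (forall g, B g -> A g) ->
  lazy_prob mul e R S (fun g => A g /\ ~ B g) n =
  lazy_prob mul e R S A n - lazy_prob mul e R S B n.
Proof.
move=> BA; rewrite !probE -mulrBr -sumrB; congr (_ * _); apply: eq_bigr => w _.
set x := walk mul e S _; rewrite /ind.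
have [ha|ha] := pselect (A x); have [hb|hb] := pselect (B x).
- by rewrite asboolF ?(asboolT ha) ?(asboolT hb) ?subrr // => -[].
- by rewrite asboolT ?(asboolT ha) ?(asboolF hb) ?subr0.
- by case: ha; apply: BA.
- by rewrite asboolF ?(asboolF ha) ?(asboolF hb) ?subr0 // => -[].
Qed.
End Prob.
Local Open Scope ring_scope.
Local Open Scope classical_set_scope.

Section Main.
Variables (R : realType) (G : eqType) (mul : G -> G -> G) (inv : G -> G) (e : G) (S : seq G).
Hypothesis ga : group_axioms mul inv e.
Hypothesis inf : infinite_carrier G.
Hypothesis rf : residually_finite mul inv e.
Hypothesis sg : sym_gen_set mul inv e S.

Local Notation Lam k := (Lambda mul inv e k).
Local Notation idx k := (gindex mul inv (Lambda mul inv e k)).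

Lemma hgen : forall g, exists w : seq G, all (mem S) w /\ g = foldl mul e w.
Proof. by case: sg. Qed.

Lemma hS : (0 < size S)%N.
Proof.
rewrite lt0n; apply/negP => /eqP/size0nil S0; case: inf; exists [:: e] => g.
have [[|a w] [wS ->]] := hgen g; first by rewrite inE.
by move: wS; rewrite S0.
Qed.

Lemma Lambda_mono k k' g : (k <= k')%N -> Lam k' g -> Lam k g.
Proof.
move=> kk h N nN [j [jk hj]]; apply: h nN _; exists j; split => //.
exact: leq_trans kk.
Qed.

Lemma Lambda_small k g : (k <= 1)%N -> Lam k g.
Proof.
move=> k1 N nN [j [jk hj]].
have : (j <= 1)%N by apply: leq_trans jk k1.
case: j hj {jk} => [|[|j]] hj // _; first by case: (has_index0 e hj).
exact: has_index1 hj nN.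
Qed.

Lemma idx_small k : (k <= 1)%N -> idx k = 1%N.
Proof.
move=> k1; apply: gindexE; first exact: ga.
  exact: Lambda_normal.
exists (fun _ => e) => g; exists ord0; split; first exact: Lambda_small.
by move=> j _; rewrite (ord1 j).
Qed.

Lemma uniq_list M : exists l : seq G, uniq l /\ size l = M.
Proof.
elim: M => [|M [l [ul sl]]]; first by exists [::].
have [g gl] : exists g, g \notin l.
  apply: contrapT => hne; apply: inf; exists l => g.
  by apply/negPn/negP => gl; apply: hne; exists g.
by exists (g :: l); rewrite /= gl ul sl.
Qed.

Lemma idx_unbounded M : exists K, (M <= idx K)%N.
Proof.
have [l [ul sl]] := uniq_list M.
have mono : forall (x : G) K K' y, (K <= K')%N ->
   (x != y -> ~ Lam K (mul (inv x) y)) -> (x != y -> ~ Lam K' (mul (inv x) y)).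
  by move=> x K K' y KK h xy hL; apply: (h xy); apply: Lambda_mono hL.
have [K hK] : exists K, forall x, x \in l -> forall y, y \in l -> x != y -> ~ Lam K (mul (inv x) y).
  apply: exists_bound.
    by move=> K K' x KK h y yl; apply: mono KK (h y yl).
  move=> x _; apply: exists_bound; first exact: mono.
  move=> y _; case: (eqVneq x y) => [->|xy]; first by exists 0%N.
  have gne : mul (inv x) y != e.
    apply/eqP => h; move/eqP: xy; apply; apply (mulgI ga (z := inv x)).
    by rewrite h (mulVg ga).
  have [N [nN [[kk hkk] hN]]] := rf gne.
  exists kk => _ hL; apply: hN; apply: hL nN _; exists kk; split => //.
have [m [r hr]] := Lambda_fin ga hgen K.
have hr' : reps mul inv (Lam K) r := hr.
exists K; rewrite (gindexE ga (Lambda_normal mul inv e K) (ex_intro _ r hr)) -sl.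
have inj : {in l &, injective (cosi hr')}.
  move=> x y xl yl /(cos_eq ga (Lambda_normal mul inv e K) hr') h.
  by apply/eqP; apply: contrapT => /negP xy; apply: (hK x xl y yl).
have := max_card (mem (map (cosi hr') l)); rewrite card_ord.
by move/card_uniqP: (map_inj_in_uniq inj); rewrite ul => -> ; rewrite size_map.
Qed.

Lemma q_cvg k : lazy_prob mul e R S (fun g => Lam k g) n @[n --> \oo] --> ((idx k)%:R^-1 : R).
Proof.
have [m [r hr]] := Lambda_fin ga hgen k.
have hr' : reps mul inv (Lam k) r := hr.
rewrite (gindexE ga (Lambda_normal mul inv e k) (ex_intro _ r hr)).
exact: (walk_cvg ga hS hgen (Lambda_normal mul inv e k) hr' (R:=R)).
Qed.

Lemma z_cvg : lazy_prob mul e R S (fun g => g = e) n @[n --> \oo] --> (0 : R).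
Proof.
apply/cvgrPdist_le => eps eps0.
have [M0 _ hM0] := nbhs_infty_ger (2 / eps).
have hM : 2 / eps <= M0.+1%:R.
  by apply: le_trans (hM0 M0 (leqnn _)) _; rewrite ler_nat.
have [K hK] := idx_unbounded M0.+1.
have e2 : 0 < eps / 2 by rewrite divr_gt0.
have /cvgrPdist_le /(_ (eps / 2) e2) [N0 _ hN0] := q_cvg (k:=K).
exists N0 => // n hn /=.
have hq := hN0 n hn; rewrite /= in hq.
have hz0 := prob_ge0 mul e S R (fun g => g = e) n.
have hzq : lazy_prob mul e R S (fun g => g = e) n <= lazy_prob mul e R S (fun g => Lam K g) n.
  apply: prob_le => g ->; exact: N1 (Lambda_normal mul inv e K).
have pos2 : 0 < 2 / eps by rewrite divr_gt0.
have hi : ((idx K)%:R : R)^-1 <= eps / 2.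
  have hpos : (0 : R) < (idx K)%:R by apply: lt_le_trans pos2 (le_trans hM _); rewrite ler_nat.
  rewrite -[eps / 2]invf_div lef_pV2 ?posrE //.
  by apply: le_trans hM _; rewrite ler_nat.
rewrite sub0r normrN ger0_norm //.
move: hq; rewrite ler_norml => /andP [h1 h2]; lra.
Qed.

Lemma a_cvg k : lazy_prob mul e R S (fun g => Lam k g /\ g <> e) n @[n --> \oo] --> ((idx k)%:R^-1 : R).
Proof.
have -> : (fun n => lazy_prob mul e R S (fun g => Lam k g /\ g <> e) n) =
   (fun n => lazy_prob mul e R S (fun g => Lam k g) n - lazy_prob mul e R S (fun g => g = e) n).
  apply: funext => n; apply: (@prob_diff G mul e S R (fun g => Lam k g) (fun g => g = e)).
  move=> g ->; exact: N1 (Lambda_normal mul inv e k).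
rewrite -[X in _ --> X]subr0; apply: cvgB; [exact: (q_cvg (k:=k)) | exact: z_cvg].
Qed.

Lemma sum_ltn d K : (d <= K)%N -> \sum_(k < K) (((k < d)%N)%:R : R) = d%:R.
Proof.
elim: K => [|K IH] dK; first by rewrite big_ord0; move: dK; rewrite leqn0 => /eqP ->.
rewrite big_ord_recr /=; case: (leqP d K) => dK'.
  by rewrite IH // addr0.
have -> : d = K.+1 by apply/eqP; rewrite eqn_leq dK.
rewrite (eq_bigr (fun _ => 1)); last by move=> i _; rewrite ltnS (ltnW (ltn_ord i)).
by rewrite sumr_const card_ord -natr1 mulr1n.
Qed.

Lemma D_sum x K : (D_G mul inv e x <= K)%N ->
  ((D_G mul inv e x)%:R : R) = \sum_(k < K) ind R (fun g => Lam k g /\ g <> e) x.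
Proof.
move=> dK; rewrite -(sum_ltn dK); apply: eq_bigr => k _; rewrite /ind.
case: (eqVneq x e) => [->|xe].
  by rewrite D_G_e ltn0 asboolF // => -[].
case: asboolP => [[h _]|h].
  by rewrite (D_G_gt rf k xe).2.
case: ltnP => // hk; case: h; split; first exact: (D_G_gt rf k xe).1.
by move/eqP: xe.
Qed.

Lemma E_decomp n : exists Kn, forall K, (Kn <= K)%N ->
  lazy_expect mul e S (fun g => (D_G mul inv e g)%:R : R) n =
  \sum_(k < K) lazy_prob mul e R S (fun g => Lam k g /\ g <> e) n.
Proof.
exists (\max_(w : n.-tuple 'I_(2 * size S)) D_G mul inv e (walk mul e S (map val w)))%N.
move=> K hK; rewrite /lazy_expect.
under [in RHS]eq_bigr do rewrite probE.
rewrite -mulr_sumr exchange_big /=; congr (_ * _); apply: eq_bigr => w _.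
apply: D_sum; apply: leq_trans hK.
exact: (@leq_bigmax _ (fun w : n.-tuple 'I_(2 * size S) => D_G mul inv e (walk mul e S (map val w))) w).
Qed.
End Main.
Local Open Scope ring_scope.
Local Open Scope classical_set_scope.

Section Tannery.
Variable R : realType.

Lemma rsum_ge0 (f : nat -> R) M N : (2 <= M)%N -> (forall k, (2 <= k)%N -> 0 <= f k) ->
  0 <= \sum_(M <= k < N) f k.
Proof.
move=> M2 hf; rewrite big_nat_cond; apply: sumr_ge0 => k /andP [/andP [Mk _] _].
by apply: hf; apply: leq_trans Mk.
Qed.

Lemma rsum_split (f : nat -> R) K0 K : (2 <= K0)%N -> (K0 <= K)%N ->
  \sum_(2 <= k < K) f k = \sum_(2 <= k < K0) f k + \sum_(K0 <= k < K) f k.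
Proof. by move=> h1 h2; rewrite (big_cat_nat h1 h2). Qed.

Lemma rsum_nd (f : nat -> R) : (forall k, (2 <= k)%N -> 0 <= f k) ->
  nondecreasing_seq (fun N => \sum_(2 <= k < N) f k).
Proof.
move=> hf; apply/nondecreasing_seqP => N /=.
case: (leqP 2 N) => h.
  by rewrite big_nat_recr //= lerDl hf.
by rewrite big_geq ?(ltnW h) // rsum_ge0.
Qed.

Lemma sum_fin_cvg (a : nat -> nat -> R) (b : nat -> R) K :
  (forall k, a n k @[n --> \oo] --> b k) ->
  \sum_(0 <= k < K) a n k @[n --> \oo] --> \sum_(0 <= k < K) b k.
Proof.
move=> hab; elim: K => [|K IH].
  rewrite big_geq //; under eq_fun do rewrite big_geq //; exact: cvg_cst.
rewrite big_nat_recr //=; under eq_fun do rewrite big_nat_recr //=.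
exact: cvgD.
Qed.

Lemma tannery (a : nat -> nat -> R) (b : nat -> R) (p : nat -> R) (E : nat -> R) :
  (forall k, (2 <= k)%N -> 0 < p k) -> cvg ((\sum_(2 <= k < N) p k) @[N --> \oo]) ->
  (forall n k, (1 <= n)%N -> (2 <= k)%N -> a n k <= p k) ->
  (forall n k, 0 <= a n k) ->
  (forall k, a n k @[n --> \oo] --> b k) ->
  b 0%N = 1 -> b 1%N = 1 ->
  (forall n, exists Kn, forall K, (Kn <= K)%N -> E n = \sum_(0 <= k < K) a n k) ->
  cvg ((\sum_(2 <= k < N) b k) @[N --> \oo]) /\
  E n @[n --> \oo] --> 2 + limn (fun N => \sum_(2 <= k < N) b k).
Proof.
move=> p0 pcvg ap a0 ab b0 b1 hE.
have p0' k : (2 <= k)%N -> 0 <= p k by move=> /p0 /ltW.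
have bge0 k : 0 <= b k.
  apply: (cvgr_to_ge (ab k)); exact: nearW.
have bp k : (2 <= k)%N -> b k <= p k.
  move=> k2; apply: (cvgr_to_le (ab k)); exists 1%N => // n /= n1; exact: ap.
set Ps := fun N => \sum_(2 <= k < N) p k.
set Bs := fun N => \sum_(2 <= k < N) b k.
have Psnd : nondecreasing_seq Ps by exact: rsum_nd.
have Bsnd : nondecreasing_seq Bs by apply: rsum_nd => k _.
have PsL N : Ps N <= limn Ps by exact: nondecreasing_cvgn_le.
have BsPs N : Bs N <= Ps N.
  by apply: ler_sum_nat => k /andP [k2 _]; exact: bp.
have Bcvg : cvgn Bs.
  apply: nondecreasing_is_cvgn => //; exists (limn Ps) => _ [N _ <-].
  exact: le_trans (BsPs N) (PsL N).
split; first exact: Bcvg.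
have BsL N : Bs N <= limn Bs by exact: nondecreasing_cvgn_le.
apply/cvgrPdist_le => eps eps0.
have e3 : 0 < eps / 3 by rewrite divr_gt0.
have /cvgrPdist_le /(_ (eps / 3) e3) [K1 _ hK1] := pcvg.
pose K0 := maxn K1 2.
have K02 : (2 <= K0)%N by rewrite leq_maxr.
have hP0 : limn Ps - Ps K0 <= eps / 3.
  have := hK1 K0 (leq_maxl _ _); rewrite /= => h.
  by apply: le_trans h; rewrite ler_norm.
have tailp K : (K0 <= K)%N -> \sum_(K0 <= k < K) p k <= eps / 3.
  move=> hK; have := PsL K; rewrite /Ps (rsum_split _ K02 hK) -/(Ps K0) => h.
  lra.
have hB0 : limn Bs - Bs K0 <= eps / 3.
  have : limn Bs <= Bs K0 + eps / 3.
    apply: (cvgr_to_le Bcvg); exists K0 => // K /= hK.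
    rewrite /Bs (rsum_split _ K02 hK) lerD2l.
    apply: le_trans (tailp K hK); apply: ler_sum_nat => k /andP [hk _].
    by apply: bp; apply: leq_trans hk.
  lra.
have hB0' := BsL K0.
have /cvgrPdist_le /(_ (eps / 3) e3) [N1 _ hN1] := sum_fin_cvg (K:=K0) ab.
exists (maxn N1 1) => // n /= hn.
have hN1n := hN1 n (leq_trans (leq_maxl _ _) hn); rewrite /= in hN1n.
have n1 : (1 <= n)%N by apply: leq_trans hn; rewrite leq_maxr.
have [Kn hKn] := hE n.
pose K := maxn Kn K0.
rewrite (hKn K (leq_maxl _ _)).
have hK0 : (K0 <= K)%N by rewrite leq_maxr.
rewrite (big_cat_nat (leq0n K0) hK0) /=.
have ta0 : 0 <= \sum_(K0 <= k < K) a n k by rewrite big_nat_cond; apply: sumr_ge0 => *.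
have ta1 : \sum_(K0 <= k < K) a n k <= eps / 3.
  apply: le_trans (tailp K hK0); apply: ler_sum_nat => k /andP [hk _].
  by apply: ap => //; apply: leq_trans hk.
have hb2 : \sum_(0 <= k < K0) b k = 2 + Bs K0.
  rewrite (big_cat_nat (leq0n 2) K02) /= big_ltn // big_ltn // big_geq // b0 b1 addr0.
  by [].
move: hN1n; rewrite hb2 => h.
move: h; rewrite !ler_norml => /andP [h1 h2]; apply/andP; split; lra.
Qed.
End Tannery.
Local Open Scope ring_scope.
Local Open Scope classical_set_scope.

Theorem proposition4p3 (R : realType) (G : eqType) (mul : G -> G -> G)
  (inv : G -> G) (e : G) (S : seq G) (p : nat -> R) :
  group_axioms mul inv e ->
  infinite_carrier G ->
  residually_finite mul inv e ->
  sym_gen_set mul inv e S ->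
  (forall k, (2 <= k)%N -> 0 < p k) ->
  cvg ((\sum_(2 <= k < N) p k) @[N --> \oo]) ->
  (forall n k, (1 <= n)%N -> (2 <= k)%N ->
     lazy_prob mul e R S (fun g => Lambda mul inv e k g /\ g <> e) n <= p k) ->
  cvg ((\sum_(2 <= k < N) (((gindex mul inv (Lambda mul inv e k))%:R : R)^-1))
         @[N --> \oo]) /\
  (lazy_expect mul e S (fun g => (D_G mul inv e g)%:R : R) n @[n --> \oo] -->
     2 + limn (fun N => \sum_(2 <= k < N) (((gindex mul inv (Lambda mul inv e k))%:R : R)^-1))).
Proof.
move=> ga inf rf sg p0 pcvg hp.
apply: (@tannery R (fun n k => lazy_prob mul e R S (fun g => Lambda mul inv e k g /\ g <> e) n)
  (fun k => ((gindex mul inv (Lambda mul inv e k))%:R : R)^-1) p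
  (fun n => lazy_expect mul e S (fun g => (D_G mul inv e g)%:R : R) n) p0 pcvg hp).
- by move=> n k; apply: prob_ge0.
- by move=> k; apply: a_cvg.
- by rewrite idx_small // invr1.
- by rewrite idx_small // invr1.
- move=> n; have [Kn hKn] := E_decomp R S rf n.
  by exists Kn => K hK; rewrite big_mkord; apply: hKn.
Qed.
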